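(* In the setting below, there are constants $C_1$ depending only on $c_Y$ and $C_2$ depending only on $p,c_Y$ such that for every $f\in B(X,Y)$: $d_p(f,A^{(p)}_\mu f)\le C_1\big(\mathcal E^{(p)}_\mu(f)\big)^{1/p}$ and $\mathcal E^{(p)}_\mu(A^{(p)}_\mu f)\le C_2\,\mathcal E^{(p)}_\mu(f)$.
   Context: Let $p\ge2$ and $(Y,d_Y)$ a complete geodesic metric space which is $p$-uniformly convex with constant $c_Y>0$ (i.e. $d_Y(x,\gamma(t))^p\le(1-t)d_Y(x,y)^p+t\,d_Y(x,z)^p-c_Y^pt(1-t)d_Y(y,z)^p$ for all $x,y,z$, constant-speed geodesics $\gamma$ from $y$ to $z$, $t\in[0,1]$). For a finitely supported probability measure $\sigma$ on $Y$, $c_p(\sigma)$ is the unique minimizer of $y\mapsto\int d_Y(u,y)^p\,d\sigma(u)$. Let $\Gamma$ be a discrete group acting freely on a discrete set $X$ and by isometries on $Y$; $\mu$ a $\Gamma$-equivariant random walk on $X$ (each $\mu(x\to\cdot)$ a finitely supported probability measure, $\mu(\gamma x\to\gamma x')=\mu(x\to x')$); $\bar\nu$ a probability measure on $\Gamma\backslash X$, $\nu(\{x\})=\bar\nu(\{\Gamma x\})$, with $\nu(x)\mu(x\to x')=\nu(x')\mu(x'\to x)$. For equivariant $f$: $\mathcal E^{(p)}_\mu(f)=\frac12\int_{\Gamma\backslash X}\sum_{x'}\mu(x\to x')d_Y(f(x),f(x'))^p\,d\bar\nu(x)$; $B(X,Y)$ = equivariant $f$ with finite energy; $d_p(f,g)=\big(\int_{\Gamma\backslash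 X}d_Y(f(x),g(x))^pd\bar\nu\big)^{1/p}$; $(A^{(p)}_\mu f)(x)=c_p(f_*\mu(x\to\cdot))$. *)

(* Defs.v *)
From mathcomp Require Import all_boot all_order all_algebra.
From mathcomp Require Import all_classical all_reals all_analysis.
From Stdlib Require Import ClassicalEpsilon.

Set Implicit Arguments.
Unset Strict Implicit.
Unset Printing Implicit Defensive.
Import Order.TTheory GRing.Theory Num.Theory.
Local Open Scope classical_set_scope.
Local Open Scope ring_scope.

Section Defs.
Variable R : realType.

Section Metric.
Variables (Y : Type) (d : Y -> Y -> R).

Definition is_metric : Prop :=
  [/\ (forall x y, 0 <= d x y),
      (forall x y, d x y = 0 <-> x = y),
      (forall x y, d x y = d y x) &
      (forall x y z, d x z <= d x y + d y z)].

Definition is_complete : Prop :=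
  forall u : nat -> Y,
    (forall e, 0 < e -> exists N, forall m n, (N <= m)%N -> (N <= n)%N ->
        d (u m) (u n) < e) ->
    exists l, forall e, 0 < e -> exists N, forall n, (N <= n)%N -> d (u n) l < e.

Definition is_cs_geodesic (gam : R -> Y) (y z : Y) : Prop :=
  [/\ gam 0 = y, gam 1 = z &
      forall s t, 0 <= s <= 1 -> 0 <= t <= 1 ->
        d (gam s) (gam t) = `|s - t| * d y z].

Definition is_geodesic_space : Prop :=
  forall y z, exists gam, is_cs_geodesic gam y z.

Definition p_uniformly_convex (p c : R) : Prop :=
  forall x y z (gam : R -> Y), is_cs_geodesic gam y z ->
    forall t, 0 <= t <= 1 ->
      d x (gam t) `^ p <=
        (1 - t) * d x y `^ p + t * d x z `^ p
        - c `^ p * t * (1 - t) * d y z `^ p.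
End Metric.

Definition is_group (G : Type) (mul : G -> G -> G) (one : G) (inv : G -> G)
  : Prop :=
  [/\ (forall a b c, mul a (mul b c) = mul (mul a b) c),
      (forall a, mul one a = a), (forall a, mul a one = a),
      (forall a, mul (inv a) a = one) & (forall a, mul a (inv a) = one)].

Definition is_action (G S : Type) (mul : G -> G -> G) (one : G)
  (act : G -> S -> S) : Prop :=
  (forall x, act one x = x) /\ (forall g h x, act (mul g h) x = act g (act h x)).

Definition free_action (G S : Type) (one : G) (act : G -> S -> S) : Prop :=
  forall g x, act g x = x -> g = one.

Definition isometric_action (G Y : Type) (d : Y -> Y -> R)
  (act : G -> Y -> Y) : Prop :=
  forall g y y', d (act g y) (act g y') = d y y'.

(* Q together with pi : X -> Q is the orbit space Gamma\X, and s is a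
   section of pi (a choice of one representative in each orbit). *)
Definition is_orbit_space (G : Type) (X Q : Type) (act : G -> X -> X)
  (pi : X -> Q) (s : Q -> X) : Prop :=
  (forall q, pi (s q) = q) /\
  (forall x x', pi x = pi x' <-> exists g, x' = act g x).

Section Walk.
Variables (X Q : choiceType).

Definition is_random_walk (mu : X -> X -> R) : Prop :=
  forall x, [/\ (forall x', 0 <= mu x x'),
      finite_set [set x' | mu x x' != 0] &
      (\esum_(x' in [set: X]) (mu x x')%:E = 1)%E].

Definition equivariant_walk (G : Type) (act : G -> X -> X)
  (mu : X -> X -> R) : Prop :=
  forall g x x', mu (act g x) (act g x') = mu x x'.

(* probability measure bar nu on the discrete set Q = Gamma\X,
   given by its point masses *)
Definition is_prob_on (nub : Q -> R) : Prop :=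
  (forall q, 0 <= nub q) /\ (\esum_(q in [set: Q]) (nub q)%:E = 1)%E.

(* nu({x}) = bar nu({Gamma x}) and nu(x) mu(x->x') = nu(x') mu(x'->x) *)
Definition reversible (pi : X -> Q) (nub : Q -> R) (mu : X -> X -> R)
  : Prop :=
  forall x x', nub (pi x) * mu x x' = nub (pi x') * mu x' x.

Variables (Y : Type) (d : Y -> Y -> R) (p : R).

(* integral over Gamma\X of a Gamma-invariant quantity, computed on the
   representatives s q *)
Definition energy (mu : X -> X -> R) (nub : Q -> R) (s : Q -> X)
  (f : X -> Y) : \bar R :=
  ((2^-1)%:E *
   \esum_(q in [set: Q])
      ((nub q)%:E *
       \esum_(x' in [set: X]) (mu (s q) x' * d (f (s q)) (f x') `^ p)%:E))%E.

Definition dist_p (nub : Q -> R) (s : Q -> X) (f g : X -> Y) : \bar R :=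
  poweR (\esum_(q in [set: Q]) (nub q * d (f (s q)) (g (s q)) `^ p)%:E)
        p^-1.

Definition equivariant_map (G : Type) (actX : G -> X -> X)
  (actY : G -> Y -> Y) (f : X -> Y) : Prop :=
  forall g x, f (actX g x) = actY g (f x).

Definition in_B (G : Type) (actX : G -> X -> X) (actY : G -> Y -> Y)
  (mu : X -> X -> R) (nub : Q -> R) (s : Q -> X) (f : X -> Y) : Prop :=
  equivariant_map actX actY f /\ (energy mu nub s f < +oo)%E.

Definition push_cost (mu : X -> X -> R) (f : X -> Y) (x : X) (y : Y)
  : \bar R :=
  \esum_(x' in [set: X]) (mu x x' * d (f x') y `^ p)%:E.

Definition barycenter_p (mu : X -> X -> R) (f : X -> Y) (x : X) : Y :=
  epsilon (inhabits (f x))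
    (fun y => forall z, (push_cost mu f x y <= push_cost mu f x z)%E).

Definition A_p (mu : X -> X -> R) (f : X -> Y) : X -> Y :=
  fun x => barycenter_p mu f x.
End Walk.

End Defs.

(* Main.v *)
Require Import Defs.
From mathcomp Require Import all_boot all_order all_algebra.
From mathcomp Require Import finmap.
From mathcomp Require Import all_classical all_reals all_analysis.
From mathcomp Require Import ring lra.
From Stdlib Require Import ClassicalEpsilon.
Set Implicit Arguments.
Unset Strict Implicit.
Unset Printing Implicit Defensive.
Import Order.TTheory GRing.Theory Num.Theory.
Import numFieldNormedType.Exports.
Local Open Scope classical_set_scope.
Local Open Scope ring_scope.

Lemma powR_le_self (R : realType) (u p : R) : 0 <= u <= 1 -> 1 <= p -> u `^ p <= u.
Proof.
move=> /andP[u0 u1] p1.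
have [->|un0] := eqVneq u 0; first by rewrite powR0 // gt_eqF // (lt_le_trans _ p1).
have up : 0 < u by rewrite lt_def un0 u0.
by rewrite -{2}(powRr1 u0) ger_powR // up u1.
Qed.

Lemma powR_cont_at (R : realType) (v p : R) : 0 <= v -> 1 <= p ->
  forall e : R, 0 < e -> exists2 del : R, 0 < del &
    forall u, 0 <= u -> `|v - u| < del -> `|v `^ p - u `^ p| < e.
Proof.
move=> v0 p1 e e0.
have [->|vn0] := eqVneq v 0.
  exists (Num.min 1 e); first by rewrite lt_min ltr01 e0.
  move=> u u0; rewrite sub0r normrN powR0 ?gt_eqF ?(lt_le_trans _ p1) // sub0r normrN.
  rewrite ger0_norm // ger0_norm ?powR_ge0 // lt_min => /andP[u1 ue].
  by rewrite (le_lt_trans _ ue) // powR_le_self // u0 ltW.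
have vp : 0 < v by rewrite lt_def vn0 v0.
have hc : {for v, continuous (fun x : R => x `^ p)}.
  apply: differentiable_continuous; apply/derivable1_diffP.
  by apply: derivable_powR; rewrite in_itv /= vp.
move: hc => /cvgr_dist_lt /(_ e e0).
move=> /nbhs_ballP [del del0 Hd]; exists del => // u u0 vu.
apply: Hd; by rewrite /ball /=.
Qed.

Lemma dist_diff (R : realType) (Y : Type) (d : Y -> Y -> R) : is_metric d ->
  forall a y l, `|d a l - d a y| <= d y l.
Proof.
case=> d0 d_eq dsym dtri a y l; rewrite ler_norml; apply/andP; split.
  have := dtri a l y; rewrite (dsym l y); lra.
have := dtri a y l; lra.
Qed.

Lemma sum_cont (R : realType) (Y : Type) (d : Y -> Y -> R) (p : R) (I : Type)
  (w : I -> R) (g : I -> Y) (l : Y) : is_metric d -> 1 <= p ->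
  (forall i, 0 <= w i) ->
  forall (s : seq I) (e : R), 0 < e -> exists2 del : R, 0 < del &
    forall y, d y l < del ->
    `|\sum_(i <- s) w i * d (g i) l `^ p - \sum_(i <- s) w i * d (g i) y `^ p| < e.
Proof.
move=> dm p1 w0; have [d0 _ _ _] := dm.
elim=> [|i s IH] e e0.
  by exists 1 => // y _; rewrite !big_nil subrr normr0.
have e20 : 0 < e / 2 by rewrite divr_gt0.
have [del1 del10 H1] := IH _ e20.
have [del2 del20 H2] : exists2 del : R, 0 < del & forall y, d y l < del ->
    `|w i * d (g i) l `^ p - w i * d (g i) y `^ p| < e / 2.
  have [->|wn0] := eqVneq (w i) 0.
    by exists 1 => // y _; rewrite !mul0r subrr normr0.
  have wp : 0 < w i by rewrite lt_def wn0 w0.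
  have [del del0 Hd] := @powR_cont_at R _ _ (d0 (g i) l) p1 _ (divr_gt0 e20 wp).
  exists del => // y dy.
  rewrite -mulrBr normrM (gtr0_norm wp) -ltr_pdivlMl // mulrC.
  apply: Hd; first exact: d0.
  exact: (le_lt_trans (@dist_diff R Y d dm (g i) y l) dy).
exists (Num.min del1 del2); first by rewrite lt_min del10 del20.
move=> y; rewrite lt_min => /andP[/H1 h1 /H2 h2].
rewrite !big_cons.
rewrite (_ : forall a b c d : R, a + b - (c + d) = (a - c) + (b - d)); last first.
  by move=> *; ring.
by rewrite (le_lt_trans (ler_normD _ _)) // (splitr e) ltrD.
Qed.

Lemma midpoint_ineq (R : realType) (Y : Type) (d : Y -> Y -> R) (p c : R) (I : Type)
  (S : seq I) (w : I -> R) (g : I -> Y) :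
  is_geodesic_space d -> p_uniformly_convex d p c ->
  (forall i, 0 <= w i) -> \sum_(i <- S) w i = 1 ->
  forall y z, exists mid, \sum_(i <- S) w i * d (g i) mid `^ p <=
    2^-1 * \sum_(i <- S) w i * d (g i) y `^ p + 2^-1 * \sum_(i <- S) w i * d (g i) z `^ p
    - c `^ p * 4^-1 * d y z `^ p.
Proof.
move=> geo uc w0 w1 y z.
have [gam hg] := geo y z.
exists (gam 2^-1).
have h2 : 0 <= (2^-1 : R) <= 1 by apply/andP; split; lra.
apply: (le_trans (ler_sum _ (fun i _ => ler_wpM2l (w0 i) (uc (g i) y z gam hg _ h2)))).
rewrite (_ : c `^ p * 4^-1 * d y z `^ p = (c `^ p * 4^-1 * d y z `^ p) * \sum_(i <- S) w i); last by rewrite w1 mulr1.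
rewrite !mulr_sumr -big_split -sumrB /=.
apply: ler_sum => i _.
rewrite (_ : (1 - 2^-1 : R) = 2^-1); last by lra.
have h4 : (4^-1 : R) = 2^-1 * 2^-1 by field.
rewrite h4 le_eqVlt; apply/orP; left; apply/eqP; ring.
Qed.

Lemma exists_minimizer (R : realType) (Y : Type) (d : Y -> Y -> R) (p c : R) (I : Type)
  (S : seq I) (w : I -> R) (g : I -> Y) (y0 : Y) :
  is_metric d -> is_complete d -> is_geodesic_space d -> p_uniformly_convex d p c ->
  0 < c -> 1 <= p ->
  (forall i, 0 <= w i) -> \sum_(i <- S) w i = 1 ->
  exists l, forall z, \sum_(i <- S) w i * d (g i) l `^ p <= \sum_(i <- S) w i * d (g i) z `^ p.
Proof.
move=> dm dc geo uc c0 p1 w0 w1.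
have [d0 d_eq dsym dtri] := dm.
have p0 : 0 < p by lra.
pose F y := \sum_(i <- S) w i * d (g i) y `^ p.
have F0 y : 0 <= F y by apply: sumr_ge0 => i _; rewrite mulr_ge0 ?powR_ge0.
pose E := [set F y | y in [set: Y]].
have hE : has_inf E.
  split; first by exists (F y0), y0.
  by exists 0 => _ [y _ <-].
pose m := inf E.
have mle z : m <= F z by apply: ge_inf; [exact: hE.2 | exists z].
have hseq : forall n : nat, exists y, F y < m + n.+1%:R^-1.
  move=> n; have hpos : 0 < (n.+1%:R^-1 : R) by rewrite invr_gt0.
  have [_ [y _ <-] hy] := @inf_adherent R E _ hpos hE.
  by exists y.
have [ys hys] := boolp.choice hseq.
have cp0 : 0 < c `^ p by rewrite powR_gt0.
have key n k : c `^ p * 4^-1 * d (ys n) (ys k) `^ p <= (F (ys n) + F (ys k)) / 2 - m.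
  have [mid hmid] := @midpoint_ineq R Y d p c I S w g geo uc w0 w1 (ys n) (ys k).
  have := mle mid; rewrite /F in hmid *; lra.
have invle n N : (N <= n)%N -> (n.+1%:R^-1 : R) <= N.+1%:R^-1.
  by move=> hn; rewrite lef_pV2 ?posrE ?ler_nat // ltnS.
have cauchy : forall e, 0 < e -> exists N, forall n k, (N <= n)%N -> (N <= k)%N ->
    d (ys n) (ys k) < e.
  move=> e e0.
  have ep0 : 0 < e `^ p by rewrite powR_gt0.
  have hb : 0 <= 4 / (c `^ p * e `^ p) by rewrite divr_ge0 // mulr_ge0 // ltW.
  exists (Num.Def.archi_bound (4 / (c `^ p * e `^ p))) => n k hn hk.
  set N := Num.Def.archi_bound _ in hn hk.
  have hN := archi_boundP hb; rewrite -/N in hN.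
  have hN1 : (N.+1%:R^-1 : R) < c `^ p * e `^ p / 4.
    rewrite -[X in _ < X]invf_div ltf_pV2 ?posrE ?ltr0n ?divr_gt0 ?mulr_gt0 //.
    by rewrite (lt_le_trans hN) // ler_nat.
  have h1 := hys n; have h2 := hys k; have i1 := invle _ _ hn; have i2 := invle _ _ hk.
  have kk := key n k.
  rewrite ltNge; apply/negP => hed.
  have : e `^ p <= d (ys n) (ys k) `^ p.
    by apply: ge0_ler_powR => //; rewrite ?posrE ?nnegrE ?d0 // ltW.
  move: kk h1 h2 i1 i2 hN1; set D := d _ _ `^ p; set a := F (ys n); set b := F (ys k).
  set u := (n.+1%:R^-1 : R); set v := (k.+1%:R^-1 : R); set t := (N.+1%:R^-1 : R).
  set C := c `^ p; set P := e `^ p.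
  move=> kk h1 h2 i1 i2 hN1 hD.
  have : C * P <= C * D by rewrite ler_wpM2l // ltW.
  nra.
have [l hl] := dc ys cauchy.
exists l => z; apply: le_trans (mle z).
rewrite -/(F l) leNgt; apply/negP => hlt.
have ep : 0 < (F l - m) / 2 by rewrite divr_gt0 // subr_gt0.
have [del del0 hdel] := @sum_cont R Y d p I w g l dm p1 w0 S _ ep.
have [N1 hN1] := hl _ del0.
have hb : 0 <= 2 / (F l - m) by rewrite divr_ge0 // ltW // subr_gt0.
pose N2 := Num.Def.archi_bound (2 / (F l - m)).
have hN2 := archi_boundP hb; rewrite -/N2 in hN2.
have hN2' : (N2.+1%:R^-1 : R) < (F l - m) / 2.
  rewrite -[X in _ < X]invf_div ltf_pV2 ?posrE ?ltr0n ?divr_gt0 ?subr_gt0 //.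
  by rewrite (lt_le_trans hN2) // ler_nat.
have h1 := hys (maxn N1 N2).
have h2 := invle (maxn N1 N2) N2 (leq_maxr _ _).
have h3 := hdel _ (hN1 _ (leq_maxl N1 N2)).
move: h3; rewrite -/(F l) -/(F (ys (maxn N1 N2))).
move: h1 h2 hN2'; set a := F (ys _); set u := ((maxn N1 N2).+1%:R^-1 : R).
set t := (N2.+1%:R^-1 : R) => h1 h2 hN2' h3.
have := ler_norm (F l - a); lra.
Qed.
Lemma act_invK (G S : Type) (mul : G -> G -> G) (one : G) (inv : G -> G) (act : G -> S -> S) :
  is_group mul one inv -> is_action mul one act ->
  forall g x, act (inv g) (act g x) = x.
Proof. by case=> _ _ _ hl _ [h1 hm] g x; rewrite -hm hl h1. Qed.

Lemma act_Kinv (G S : Type) (mul : G -> G -> G) (one : G) (inv : G -> G) (act : G -> S -> S) :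
  is_group mul one inv -> is_action mul one act ->
  forall g x, act g (act (inv g) x) = x.
Proof. by case=> _ _ _ _ hr [h1 hm] g x; rewrite -hm hr h1. Qed.

Lemma act_free_cancel (G S : Type) (mul : G -> G -> G) (one : G) (inv : G -> G) (act : G -> S -> S) :
  is_group mul one inv -> is_action mul one act -> free_action one act ->
  forall a b z, act a z = act b z -> a = b.
Proof.
move=> hg ha hf a b z e.
have : act (mul (inv b) a) z = z.
  have [h1 hm] := ha; have [_ _ _ hl _] := hg.
  by rewrite hm e -hm hl h1.
move=> /hf h; case: hg h => hA h1l h1r hl hr h.
by rewrite -[a]h1l -(hr b) -hA h h1r.
Qed.

Lemma inv_invK (G : Type) (mul : G -> G -> G) (one : G) (inv : G -> G) :
  is_group mul one inv -> forall a, inv (inv a) = a.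
Proof.
case=> hA h1l h1r hl hr a.
by rewrite -[inv (inv a)]h1r -(hl a) hA hl h1l.
Qed.

Lemma pi_act (G X Q : Type) (act : G -> X -> X) (pi : X -> Q) (s : Q -> X) :
  is_orbit_space act pi s -> forall g x, pi (act g x) = pi x.
Proof. by case=> _ ho g x; symmetry; apply/ho; exists g. Qed.

Lemma esumZ_le (R : realType) (T : choiceType) (I : set T) (c : R) (a : T -> \bar R) :
  0 <= c -> (forall i, I i -> (0 <= a i)%E) ->
  (\esum_(i in I) (c%:E * a i) <= c%:E * \esum_(i in I) a i)%E.
Proof.
move=> c0 a0; apply: ge_ereal_sup => /= _ [X [finX XI]] <-.
have -> : (\sum_(i \in X) (c%:E * a i) = \sum_(i \in X) (c%:E * (if i \in X then a i else 0)))%E.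
  apply: eq_fsbigr => i; rewrite inE => Xi; by rewrite ifT // inE.
rewrite -ge0_mule_fsumr; last first.
  move=> i; case: ifP => //; rewrite inE => /XI; exact: a0.
apply: lee_wpmul2l; first by rewrite lee_fin.
apply: ereal_sup_ubound; exists X => //.
apply: eq_fsbigr => i; rewrite inE => Xi; by rewrite ifT // inE.
Qed.

Lemma esumZ (R : realType) (T : choiceType) (I : set T) (c : R) (a : T -> \bar R) :
  0 <= c -> (forall i, I i -> (0 <= a i)%E) ->
  (\esum_(i in I) (c%:E * a i) = c%:E * \esum_(i in I) a i)%E.
Proof.
move=> c0 a0; apply/eqP; rewrite eq_le esumZ_le //=.
have [->|cn0] := eqVneq c 0.
  by rewrite mul0e esum_ge0 // => i Ii; rewrite mul0e.
have cp : 0 < c by rewrite lt_def cn0 c0.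
have := @esumZ_le R T I (c^-1) (fun i => (c%:E * a i)%E) _ _.
rewrite invr_ge0 c0 => /(_ isT) H.
have : (\esum_(i in I) a i <= c^-1%:E * \esum_(i in I) (c%:E * a i))%E.
  rewrite (le_trans _ (H _)) //; last by move=> i Ii; rewrite mule_ge0 ?lee_fin ?a0.
  rewrite le_eqVlt; apply/orP; left; apply/eqP; apply: eq_esum => i Ii.
  by rewrite muleA -EFinM mulVf ?gt_eqF // mul1e.
move=> H2; rewrite -(lee_pmul2l (x := c^-1%:E)) ?lte_fin ?invr_gt0 //.
  rewrite muleA -EFinM mulVf ?gt_eqF // mul1e //.
Qed.

Lemma orbit_sum (R : realType) (G : Type) (mul : G -> G -> G) (one : G) (inv : G -> G)
  (X Q : choiceType) (actX : G -> X -> X) (pi : X -> Q) (s : Q -> X)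
  (mu : X -> X -> R) (nub : Q -> R) (h : X -> R) :
  is_group mul one inv -> is_action mul one actX -> free_action one actX ->
  is_orbit_space actX pi s -> equivariant_walk actX mu ->
  (forall x y, 0 <= mu x y) -> (forall x, \esum_(y in [set: X]) (mu x y)%:E = 1%E) ->
  (forall q, 0 <= nub q) -> reversible pi nub mu ->
  (forall x, 0 <= h x) -> (forall g x, h (actX g x) = h x) ->
  (\esum_(q in [set: Q]) ((nub q)%:E * \esum_(x' in [set: X]) (mu (s q) x' * h x')%:E)
   = \esum_(q in [set: Q]) (nub q * h (s q))%:E)%E.
Proof.
move=> hg ha hf ho heq mu0 mu1 nub0 hrev h0 hinv.
have hpi := pi_act ho.
have [hs horb] := ho.
have hk : forall y, exists k, y = actX k (s (pi y)).
  by move=> y; apply/horb; rewrite hs.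
have [kf hkf] := boolp.choice hk.
transitivity (\esum_(q in [set: Q]) \esum_(x' in [set: X]) (nub q * (mu (s q) x' * h x'))%:E)%E.
  apply: eq_esum => q _; rewrite -esumZ //; last by move=> *; rewrite lee_fin mulr_ge0.
rewrite esum_esum; last by move=> *; rewrite lee_fin !mulr_ge0.
pose Phi (j : Q * X) := (pi j.2, actX (inv (kf j.2)) (s j.1)).
have hT : [set: Q] `*`` (fun=> [set: X]) = [set: Q * X] by apply/seteqP; split.
rewrite hT (reindex_esum [set: Q * X] [set: Q * X] Phi); last first.
  split.
  - by move=> j.
  - move=> [q1 y1] [q2 y2] _ _ [] /= e1 e2.
    have eq : q1 = q2.
      by have := congr1 pi e2; rewrite !hpi !hs.
    subst q2.
    have ek := act_free_cancel hg ha hf e2.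
    have ek' : kf y1 = kf y2.
      by rewrite -(inv_invK hg (kf y1)) ek (inv_invK hg).
    by rewrite (hkf y1) (hkf y2) ek' e1.
  - move=> [q x'] _ /=.
    pose hh := kf x'.
    pose y := actX (inv hh) (s q).
    exists (pi x', y) => //.
    have piy : pi y = q by rewrite /y hpi hs.
    have kfy : kf y = inv hh.
      apply: (act_free_cancel hg ha hf (z := s q)).
      by rewrite -piy -hkf piy.
    by rewrite /Phi /= piy kfy (inv_invK hg) /hh -hkf.
transitivity (\esum_(j in [set: Q * X]) (nub j.1 * (mu (s j.1) j.2 * h (s j.1)))%:E)%E.
  apply: eq_esum => [[q' y]] _; rewrite /Phi /=.
  set k := kf y; set x' := actX (inv k) (s q').
  have px' : pi x' = q' by rewrite /x' hpi hs.
  rewrite mulrA -{1}(hs (pi y)) hrev px'.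
  have -> : mu x' (s (pi y)) = mu (s q') y.
    by rewrite -(heq k) /x' (act_Kinv hg ha) -hkf.
  by rewrite /x' hinv mulrA.
rewrite -hT -(@esum_esum R Q X [set: Q] (fun=> [set: X]) (fun q y => (nub q * (mu (s q) y * h (s q)))%:E)); last by move=> *; rewrite lee_fin !mulr_ge0.
apply: eq_esum => q _.
transitivity (\esum_(y in [set: X]) ((nub q * h (s q))%:E * (mu (s q) y)%:E))%E.
  by apply: eq_esum => y _; rewrite -EFinM; congr (_%:E); ring.
by rewrite esumZ ?mulr_ge0 // ?mu1 ?mule1 // => *; rewrite lee_fin.
Qed.
Lemma esum_finsupp (R : realType) (T : choiceType) (a : T -> R) (S : {fset T}) :
  (forall x, 0 <= a x) -> (forall x, x \notin S -> a x = 0) ->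
  (\esum_(x in [set: T]) (a x)%:E = (\sum_(x <- S) a x)%:E)%E.
Proof.
move=> a0 aS.
rewrite (esumID [set x | x \in S]); last by move=> *; rewrite lee_fin.
rewrite [X in (_ + X)%E]esum1 ?adde0; last first.
  by move=> x [_ /= xS]; rewrite aS //; apply/negP => h; apply: xS.
rewrite setTI esum_fset //; last by move=> *; rewrite lee_fin.
rewrite fsumEFin // fsbig_finite //.
  by rewrite [fset_set _](_ : _ = S) // set_fsetK.
Qed.

Definition supp (R : realType) (X : choiceType) (mu : X -> X -> R) (x : X) : {fset X} :=
  fset_set [set x' | mu x x' != 0].

Lemma supp_out (R : realType) (X : choiceType) (mu : X -> X -> R) :
  is_random_walk mu -> forall x y, y \notin supp mu x -> mu x y = 0.
Proof.
move=> rw x y; have [_ fin _] := rw x.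
rewrite /supp in_fset_set // => /negP h.
have [//|h2] := eqVneq (mu x y) 0.
by exfalso; apply: h; rewrite inE.
Qed.

Lemma esum_mu (R : realType) (X : choiceType) (mu : X -> X -> R) (h : X -> R) :
  is_random_walk mu -> (forall y, 0 <= h y) -> forall x,
  (\esum_(y in [set: X]) (mu x y * h y)%:E = (\sum_(y <- supp mu x) mu x y * h y)%:E)%E.
Proof.
move=> rw h0 x; have [m0 _ _] := rw x.
apply: esum_finsupp => [y|y hy]; first by rewrite mulr_ge0.
by rewrite (supp_out rw hy) mul0r.
Qed.

Lemma sum_mu1 (R : realType) (X : choiceType) (mu : X -> X -> R) :
  is_random_walk mu -> forall x, \sum_(y <- supp mu x) mu x y = 1.
Proof.
move=> rw x; have [m0 _ m1] := rw x.
have := @esum_mu R X mu (fun=> 1) rw (fun _ => ler01) x.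
under eq_esum do rewrite mulr1.
rewrite m1 => /esym /eqP; rewrite eqe => /eqP <-.
by apply: eq_bigr => y _; rewrite mulr1.
Qed.

Definition ecost (R : realType) (Y : Type) (d : Y -> Y -> R) (p : R) (X : choiceType)
  (mu : X -> X -> R) (f : X -> Y) (x : X) : R :=
  \sum_(y <- supp mu x) mu x y * d (f x) (f y) `^ p.

Lemma ecost_inv (R : realType) (Y : Type) (d : Y -> Y -> R) (p : R)
  (G : Type) (mul : G -> G -> G) (one : G) (inv : G -> G)
  (X : choiceType) (actX : G -> X -> X) (actY : G -> Y -> Y) (mu : X -> X -> R) (f : X -> Y) :
  is_group mul one inv -> is_action mul one actX -> equivariant_walk actX mu ->
  isometric_action d actY -> equivariant_map actX actY f -> is_random_walk mu ->
  forall g x, ecost d p mu f (actX g x) = ecost d p mu f x.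
Proof.
move=> hg ha heq hiso hf rw g x.
apply/eqP; rewrite -eqe; apply/eqP; rewrite /ecost.
rewrite -!(esum_mu (h := fun y => d (f _) (f y) `^ p)) //; try by move=> *; exact: powR_ge0.
rewrite (reindex_esum [set: X] [set: X] (actX g)); last first.
  split => //.
  - by move=> a b _ _ e; rewrite -(act_invK hg ha g a) e (act_invK hg ha).
  - by move=> y _; exists (actX (inv g) y) => //; rewrite (act_Kinv hg ha).
apply: eq_esum => y _.
by rewrite heq !hf hiso.
Qed.

Lemma bary_min (R : realType) (Y : Type) (d : Y -> Y -> R) (p c : R)
  (X : choiceType) (mu : X -> X -> R) (f : X -> Y) :
  is_metric d -> is_complete d -> is_geodesic_space d -> p_uniformly_convex d p c ->
  0 < c -> 1 <= p -> is_random_walk mu -> forall x z,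
  \sum_(y <- supp mu x) mu x y * d (f y) (A_p d p mu f x) `^ p <=
  \sum_(y <- supp mu x) mu x y * d (f y) z `^ p.
Proof.
move=> dm dc geo uc c0 p1 rw x.
have [m0 _ _] := rw x.
have pc y : push_cost d p mu f x y = (\sum_(y' <- supp mu x) mu x y' * d (f y') y `^ p)%:E.
  by rewrite /push_cost (esum_mu (h := fun y' => d (f y') y `^ p)) // => *; exact: powR_ge0.
have [l hl] := @exists_minimizer R Y d p c X (supp mu x) (mu x) f (f x) dm dc geo uc c0 p1 m0 (sum_mu1 rw x).
have := @epsilon_spec Y (inhabits (f x))
  (fun y => forall z, (push_cost d p mu f x y <= push_cost d p mu f x z)%E).
move=> /(_ _) H z.
have : (push_cost d p mu f x (A_p d p mu f x) <= push_cost d p mu f x z)%E.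
  apply: H; exists l => z'; by rewrite !pc lee_fin.
by rewrite !pc lee_fin.
Qed.

Lemma pow_le_mul (R : realType) (k M x p : R) : 0 <= k -> 0 <= M -> 0 <= x -> 0 <= p ->
  x <= k * M -> x `^ p <= k `^ p * M `^ p.
Proof.
move=> k0 M0 x0 p0 h; rewrite -powRM //.
by apply: ge0_ler_powR => //; rewrite nnegrE // mulr_ge0.
Qed.

Lemma pow2_le (R : realType) (a b p : R) : 0 <= a -> 0 <= b -> 0 <= p ->
  (a + b) `^ p <= 2 `^ p * (a `^ p + b `^ p).
Proof.
move=> a0 b0 p0.
have [M [hM [aM bM]]] : exists M, (M = a \/ M = b) /\ a <= M /\ b <= M.
  case: (leP a b) => h; [exists b | exists a]; split; [by right | split; lra | by left | split; lra].
have hx : a + b <= 2 * M by lra.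
have k0 : (0 : R) <= 2 by lra.
have M0 : 0 <= M by lra.
have x0 : 0 <= a + b by lra.
apply: (le_trans (pow_le_mul k0 M0 x0 p0 hx)).
apply: ler_wpM2l; first exact: powR_ge0.
have := powR_ge0 a p; have := powR_ge0 b p.
by case: hM => ->; lra.
Qed.

Lemma pow3_le (R : realType) (a b c p : R) : 0 <= a -> 0 <= b -> 0 <= c -> 0 <= p ->
  (a + b + c) `^ p <= 2 `^ p * 2 `^ p * (a `^ p + b `^ p + c `^ p).
Proof.
move=> a0 b0 c0 p0.
have ab0 : 0 <= a + b by lra.
apply: (le_trans (pow2_le ab0 c0 p0)).
have h := pow2_le a0 b0 p0.
have t0 := powR_ge0 2 p; have t1 := powR_ge0 c p; have t2 := powR_ge0 a p.
have t3 := powR_ge0 b p.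
have t4 : 1 <= 2 `^ p by rewrite -{1}(powRr0 2); apply: ler_powR; lra.
rewrite -mulrA; apply: ler_wpM2l => //.
rewrite mulrDr; apply: lerD => //.
rewrite -[X in X <= _]mul1r ler_pM //.
Qed.

Lemma powR_mono_tri (R : realType) (x y p : R) : 0 <= x -> 0 <= p -> x <= y -> x `^ p <= y `^ p.
Proof.
move=> x0 p0 xy; apply: ge0_ler_powR => //; rewrite nnegrE //; exact: le_trans xy.
Qed.

Lemma D_bound (R : realType) (Y : Type) (d : Y -> Y -> R) (p c : R)
  (X : choiceType) (mu : X -> X -> R) (f : X -> Y) :
  is_metric d -> is_complete d -> is_geodesic_space d -> p_uniformly_convex d p c ->
  0 < c -> 1 <= p -> is_random_walk mu -> forall x,
  d (f x) (A_p d p mu f x) `^ p <= 2 `^ p * 2 * ecost d p mu f x.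
Proof.
move=> dm dc geo uc c0 p1 rw x.
have [d0 _ dsym dtri] := dm; have [m0 _ _] := rw x.
have p0 : 0 <= p by lra.
set a := A_p d p mu f x.
rewrite -[X in X <= _]mul1r -{1}(sum_mu1 rw x) mulr_suml.
apply: (le_trans (y := \sum_(y <- supp mu x) mu x y * (2 `^ p * (d (f x) (f y) `^ p + d (f y) a `^ p)))).
  apply: ler_sum => y _; apply: ler_wpM2l => //.
  apply: le_trans (pow2_le (d0 _ _) (d0 _ _) p0).
  by apply: powR_mono_tri => //; apply: dtri.
have hb := @bary_min R Y d p c X mu f dm dc geo uc c0 p1 rw x (f x).
rewrite -/a in hb.
have -> : \sum_(y <- supp mu x) mu x y * (2 `^ p * (d (f x) (f y) `^ p + d (f y) a `^ p)) =
  2 `^ p * (ecost d p mu f x + \sum_(y <- supp mu x) mu x y * d (f y) a `^ p).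
  rewrite /ecost -big_split mulr_sumr /=.
  by apply: eq_bigr => y _; ring.
rewrite -[2 `^ p * 2 * _]mulrA; apply: ler_wpM2l; first exact: powR_ge0.
have : \sum_(y <- supp mu x) mu x y * d (f y) (f x) `^ p = ecost d p mu f x.
  by apply: eq_bigr => y _; rewrite dsym.
lra.
Qed.

Lemma eA_bound (R : realType) (Y : Type) (d : Y -> Y -> R) (p c : R)
  (X : choiceType) (mu : X -> X -> R) (f : X -> Y) :
  is_metric d -> is_complete d -> is_geodesic_space d -> p_uniformly_convex d p c ->
  0 < c -> 1 <= p -> is_random_walk mu -> forall x,
  \sum_(y <- supp mu x) mu x y * d (A_p d p mu f x) (A_p d p mu f y) `^ p <=
  2 `^ p * 2 `^ p * (2 `^ p * 2 * ecost d p mu f x + ecost d p mu f x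
     + 2 `^ p * 2 * \sum_(y <- supp mu x) mu x y * ecost d p mu f y).
Proof.
move=> dm dc geo uc c0 p1 rw x.
have [d0 _ dsym dtri] := dm; have [m0 _ _] := rw x.
have p0 : 0 <= p by lra.
set K := 2 `^ p * 2 `^ p; set B := 2 `^ p * 2.
set A := A_p d p mu f.
have K0 : 0 <= K by rewrite mulr_ge0 ?powR_ge0.
have Db z := @D_bound R Y d p c X mu f dm dc geo uc c0 p1 rw z.
apply: (le_trans (y := \sum_(y <- supp mu x) mu x y * (K * (B * ecost d p mu f x
   + d (f x) (f y) `^ p + B * ecost d p mu f y)))).
  apply: ler_sum => y _; apply: ler_wpM2l => //.
  have h1 : d (A x) (A y) <= d (f x) (A x) + d (f x) (f y) + d (f y) (A y).
    have := dtri (A x) (f x) (A y); have := dtri (f x) (f y) (A y).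
    rewrite (dsym (A x) (f x)); lra.
  apply: le_trans (powR_mono_tri (d0 _ _) p0 h1) _.
  apply: le_trans (pow3_le (d0 _ _) (d0 _ _) (d0 _ _) p0) _.
  apply: ler_wpM2l => //.
  have := Db x; have := Db y; rewrite -/A -/B; lra.
have e1 := sum_mu1 rw x.
have -> : \sum_(y <- supp mu x) mu x y * (K * (B * ecost d p mu f x
   + d (f x) (f y) `^ p + B * ecost d p mu f y)) =
   K * (B * ecost d p mu f x * \sum_(y <- supp mu x) mu x y + ecost d p mu f x
     + B * \sum_(y <- supp mu x) mu x y * ecost d p mu f y).
  transitivity (\sum_(y <- supp mu x) (K * B * ecost d p mu f x) * mu x y
    + \sum_(y <- supp mu x) K * (mu x y * d (f x) (f y) `^ p)
    + \sum_(y <- supp mu x) (K * B) * (mu x y * ecost d p mu f y)).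
    rewrite -!big_split /=; apply: eq_bigr => y _; ring.
  rewrite -!mulr_sumr /ecost; ring.
by rewrite e1 mulr1.
Qed.

Lemma energy_eq (R : realType) (Y : Type) (d : Y -> Y -> R) (p : R)
  (X Q : choiceType) (mu : X -> X -> R) (nub : Q -> R) (s : Q -> X) (f : X -> Y) :
  is_random_walk mu ->
  energy d p mu nub s f = ((2^-1)%:E * \esum_(q in [set: Q]) (nub q * ecost d p mu f (s q))%:E)%E.
Proof.
move=> rw; rewrite /energy; congr (_ * _)%E; apply: eq_esum => q _.
by rewrite (esum_mu (h := fun y => d (f (s q)) (f y) `^ p)) // => *; exact: powR_ge0.
Qed.

Theorem lemma3p7 (R : realType) :
  forall cY : R, 0 < cY ->
  exists C1 : R, forall p : R, 2 <= p ->
  exists C2 : R,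
  forall (Y : Type) (d : Y -> Y -> R),
    is_metric d -> is_complete d -> is_geodesic_space d ->
    p_uniformly_convex d p cY ->
  forall (G : Type) (mul : G -> G -> G) (one : G) (inv : G -> G),
    is_group mul one inv ->
  forall (X : choiceType) (actX : G -> X -> X),
    is_action mul one actX -> free_action one actX ->
  forall (actY : G -> Y -> Y),
    is_action mul one actY -> isometric_action d actY ->
  forall (Q : choiceType) (pi : X -> Q) (s : Q -> X),
    is_orbit_space actX pi s ->
  forall (mu : X -> X -> R),
    is_random_walk mu -> equivariant_walk actX mu ->
  forall (nub : Q -> R),
    is_prob_on nub -> reversible pi nub mu ->
  forall f : X -> Y, in_B d p actX actY mu nub s f ->
    (dist_p d p nub s f (A_p d p mu f)
       <= C1%:E * poweR (energy d p mu nub s f) p^-1)%E /\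
    (energy d p mu nub s (A_p d p mu f) <= C2%:E * energy d p mu nub s f)%E.

Proof.
move=> cY cY0; exists 4 => p p2.
exists (2 `^ p * 2 `^ p * (2 `^ p * 2 + 1 + 2 `^ p * 2)).
move=> Y d dm dc geo uc G mul one inv hg X actX hax hfree actY hay hiso Q pi s ho mu rw heq nub hnub hrev f [hfeq hfin].
have p1 : 1 <= p by lra.
have p0 : 0 < p by lra.
have [d0 _ dsym _] := dm.
have m0 x y : 0 <= mu x y by have [] := rw x.
have [nub0 _] := hnub.
set e := ecost d p mu f.
set A := A_p d p mu f.
have e0 x : 0 <= e x.
  by apply: sumr_ge0 => y _; rewrite mulr_ge0 ?powR_ge0.
set SE := (\esum_(q in [set: Q]) (nub q * e (s q))%:E)%E.
have SE0 : (0 <= SE)%E by apply: esum_ge0 => q _; rewrite lee_fin mulr_ge0.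
have hE := @energy_eq R Y d p X Q mu nub s f rw.
rewrite -/e -/SE in hE.
have SEfin : (SE < +oo)%E.
  move: hfin; rewrite hE; apply: contraTT; rewrite -!leNgt leye_eq => /eqP ->.
  by rewrite mulry gtr0_sg ?invr_gt0 // mul1e.
have [E0 hE0] : exists E0 : R, SE = E0%:E.
  by exists (fine SE); rewrite fineK // ge0_fin_numE.
have E00 : 0 <= E0 by rewrite -lee_fin -hE0.
split.
-
  have B0 : 0 <= 2 `^ p * 2 by rewrite mulr_ge0 ?powR_ge0.
  set SD := (\esum_(q in [set: Q]) (nub q * d (f (s q)) (A (s q)) `^ p)%:E)%E.
  have SDle : (SD <= (2 `^ p * 2)%:E * SE)%E.
    rewrite /SE -esumZ //; last by move=> q _; rewrite lee_fin mulr_ge0.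
    apply: le_esum => q _; rewrite -EFinM lee_fin.
    have := @D_bound R Y d p cY X mu f dm dc geo uc cY0 p1 rw (s q).
    rewrite -/A -/e => h.
    rewrite mulrCA; apply: ler_wpM2l => //.
  have SD0 : (0 <= SD)%E by apply: esum_ge0 => q _; rewrite lee_fin mulr_ge0 ?powR_ge0.
  have SDfin : (SD < +oo)%E.
    by apply: le_lt_trans SDle _; rewrite hE0 -EFinM ltry.
  have [D0 hD0] : exists D0 : R, SD = D0%:E.
    by exists (fine SD); rewrite fineK // ge0_fin_numE.
  have D00 : 0 <= D0 by rewrite -lee_fin -hD0.
  rewrite /dist_p -/A -/SD hD0 hE hE0 -EFinM poweR_EFin lee_fin.
  move: SDle; rewrite hD0 hE0 -EFinM lee_fin => SDle.
  set F0 := 2^-1 * E0.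
  have F00 : 0 <= F0 by rewrite mulr_ge0 // invr_ge0.
  have hC : (2 `^ p * 4) `^ p^-1 <= (4 : R).
    have -> : (4 : R) = 2 `^ 2 by rewrite powR_mulrn //; lra.
    rewrite -powRD; last by apply/implyP => _; lra.
    rewrite -powRrM; apply: ler_powR; first lra.
    rewrite ler_pdivrMr //; lra.
  apply: (le_trans (y := (2 `^ p * 4 * F0) `^ p^-1)).
    apply: powR_mono_tri => //; first by rewrite invr_ge0 ltW.
    rewrite /F0; move: SDle; set P := 2 `^ p => SDle.
    have -> : P * 4 * (2^-1 * E0) = P * 2 * E0 by field.
    done.
  rewrite powRM ?mulr_ge0 ?powR_ge0 //.
  by apply: ler_wpM2r; [exact: powR_ge0 | exact: hC].
- have hA := @energy_eq R Y d p X Q mu nub s A rw.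
  rewrite hA hE.
  set K := 2 `^ p * 2 `^ p; set B := 2 `^ p * 2.
  have K0 : 0 <= K by rewrite mulr_ge0 ?powR_ge0.
  have B0 : 0 <= B by rewrite mulr_ge0 ?powR_ge0.
  pose M x := \sum_(y <- supp mu x) mu x y * e y.
  have M0 x : 0 <= M x by apply: sumr_ge0 => y _; rewrite mulr_ge0.
  have mu1 x : (\esum_(y in [set: X]) (mu x y)%:E = 1)%E by have [] := rw x.
  have einv g x : e (actX g x) = e x.
    exact: (@ecost_inv R Y d p G mul one inv X actX actY mu f hg hax heq hiso hfeq rw).
  have hM : (\esum_(q in [set: Q]) (nub q * M (s q))%:E = SE)%E.
    rewrite /SE -(@orbit_sum R G mul one inv X Q actX pi s mu nub e hg hax hfree ho heq m0 mu1 nub0 hrev e0 einv).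
    apply: eq_esum => q _; rewrite (esum_mu (h := e)) //.
  have SAle : (\esum_(q in [set: Q]) (nub q * ecost d p mu A (s q))%:E <=
      (K * (B + 1))%:E * SE + (K * B)%:E * SE)%E.
    rewrite -{2}hM /SE -!esumZ //; try by move=> q _; rewrite lee_fin mulr_ge0.
    rewrite -esumD; try by move=> q _; rewrite -EFinM lee_fin !mulr_ge0.
    apply: le_esum => q _; rewrite -!EFinM -EFinD lee_fin.
    have := @eA_bound R Y d p cY X mu f dm dc geo uc cY0 p1 rw (s q).
    rewrite -/A -/e -/K -/B -/(M (s q)) => h.
    have hn := nub0 q.
    have : nub q * ecost d p mu A (s q) <= nub q * (K * (B * e (s q) + e (s q) + B * M (s q))).
      by apply: ler_wpM2l.
    move=> h2; apply: (le_trans h2).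
    rewrite le_eqVlt; apply/orP; left; apply/eqP; ring.
    all: try (by move=> q _; rewrite -EFinM lee_fin !mulr_ge0 // ?addr_ge0); try (by rewrite mulr_ge0 // ?addr_ge0).
  rewrite hE0 -!EFinM -EFinD in SAle.
  rewrite hE0 -!EFinM.
  apply: le_trans (lee_wpmul2l _ SAle) _; first by rewrite lee_fin invr_ge0.
  rewrite -EFinM lee_fin.
  rewrite le_eqVlt; apply/orP; left; apply/eqP; rewrite -/K -/B; ring.
Qed.
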